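(* Let $n\ge 2$ be an integer, let $A$ be a complex Banach algebra, and let $0<r<\frac{1}{2}$, $\theta\in[0,\infty)$ be real numbers. Suppose $f:A\to A$ satisfies $$\Big\|\mu f\Big(\frac{x+y}{2}\Big)+\mu f\Big(\frac{x-y}{2}\Big)-f(\mu x)+f(a^n)-\big(f(a)a^{n-1}+af(a)a^{n-2}+\cdots+a^{n-2}f(a)a+a^{n-1}f(a)\big)\Big\|\le \theta(\|x\|^r\|y\|^r+\|a\|^{2r})$$ for all $\mu\in\mathbb{T}$ and all $x,y,a\in A$. Then there exists a unique $n$-Jordan derivation $D:A\to A$ such that $$\|f(x)-D(x)\|\le \frac{3^r\theta}{2-2^r}\|x\|^{2r}$$ for all $x\in A$.
   Context: $\mathbb{T}=\{\mu\in\mathbb{C}:|\mu|=1\}$. For an integer $n\ge 2$, an $n$-Jordan derivation on an algebra $A$ is a linear map $D:A\to A$ such that $D(a^n)=D(a)a^{n-1}+aD(a)a^{n-2}+\cdots+a^{n-2}D(a)a+a^{n-1}D(a)$ for all $a\in A$. *)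

(* Defs.v *)
From HB Require Import structures.
From mathcomp Require Import all_boot all_order all_algebra.
From mathcomp Require Import all_classical all_reals all_analysis.
From mathcomp Require Import complex.
Set Implicit Arguments. Unset Strict Implicit. Unset Printing Implicit Defensive.
Import Order.TTheory GRing.Theory Num.Theory.
Import numFieldNormedType.Exports.
Local Open Scope ring_scope.
Local Open Scope complex_scope.

(* The complex field is R[i] (= complex R) for R : realType.
   A complex Banach space is a completeNormedModType R[i]; its norm
   takes values in R[i] (nonnegative reals), we read them in R via Re. *)
Definition nrm (R : realType) (A : normedModType R[i]) (x : A) : R :=
  complex.Re `|x|.

Definition banach_algebra_mul (R : realType) (A : completeNormedModType R[i])
  (mul : A -> A -> A) : Prop :=
  (forall x y z, mul x (mul y z) = mul (mul x y) z) /\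
  (forall x y z, mul (x + y) z = mul x z + mul y z) /\
  (forall x y z, mul x (y + z) = mul x y + mul x z) /\
  (forall (c : R[i]) x y, mul (c *: x) y = c *: mul x y) /\
  (forall (c : R[i]) x y, mul x (c *: y) = c *: mul x y) /\
  (forall x y, nrm (mul x y) <= nrm x * nrm y).

Definition lpow (A : Type) (mul : A -> A -> A) (a : A) (k : nat) (x : A) : A :=
  iter k (mul a) x.
Definition rpow (A : Type) (mul : A -> A -> A) (a : A) (k : nat) (x : A) : A :=
  iter k (fun y => mul y a) x.

Definition apow (A : Type) (mul : A -> A -> A) (a : A) (n : nat) : A :=
  lpow mul a n.-1 a.

Definition jordan_sum (R : realType) (A : completeNormedModType R[i])
  (mul : A -> A -> A) (n : nat) (D : A -> A) (a : A) : A :=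
  \sum_(k < n) rpow mul a (n.-1 - k) (lpow mul a k (D a)).

Definition n_jordan_derivation (R : realType) (A : completeNormedModType R[i])
  (mul : A -> A -> A) (n : nat) (D : A -> A) : Prop :=
  [/\ (forall x y, D (x + y) = D x + D y),
      (forall (c : R[i]) x, D (c *: x) = c *: D x)
    & (forall a, D (apow mul a n) = jordan_sum mul n D a)].

(* Main.v *)
Require Import Defs.
From HB Require Import structures.
From mathcomp Require Import all_boot all_order all_algebra.
From mathcomp Require Import all_classical all_reals all_analysis.
From mathcomp Require Import complex.
From mathcomp Require Import ring lra zify.
Import Order.TTheory GRing.Theory Num.Theory.
Import numFieldNormedType.Exports.
Local Open Scope ring_scope.
Local Open Scope complex_scope.

Lemma bern (R : realType) (p : R) (k : nat) : 1 <= p -> 1 + k%:R * (p - 1) <= p ^+ k.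
Proof.
move=> p1; elim: k => [|k IH]; first by rewrite expr0 mul0r addr0.
rewrite exprS -natr1.
have kp : 0 <= k%:R :> R by apply: ler0n.
have h0 : 0 <= p ^+ k by apply: exprn_ge0; lra.
have : 0 <= (p - 1) * (p ^+ k - 1 - k%:R * (p - 1)) by apply: mulr_ge0; lra.
have : 0 <= (p - 1) * k%:R * (p-1) by apply: mulr_ge0; [apply: mulr_ge0|]; lra.
nra.
Qed.

Lemma geo0 (R : realType) (d C p q : R) : 0 <= d -> 0 < q -> q < p ->
  (forall k : nat, d * p ^+ k <= C * q ^+ k) -> d = 0.
Proof.
move=> d0 q0 qp H.
have rho1 : 1 < p / q by rewrite ltr_pdivlMr // mul1r.
apply/eqP; rewrite eq_le d0 andbT; rewrite leNgt; apply/negP => dpos.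
set e := d * (p / q - 1).
have e0 : 0 < e by apply: mulr_gt0 => //; lra.
set k := (Num.truncn (C / e)).+1.
have hk : C / e < k%:R by apply: truncnS_gt.
have hb := @bern R _ k (ltW rho1).
have : d * (p / q) ^+ k <= C.
  have qk : 0 < q ^+ k by apply: exprn_gt0.
  by rewrite expr_div_n mulrA ler_pdivrMr //; apply: H.
have : C < k%:R * e by rewrite -ltr_pdivrMr.
rewrite /e; move: hb; set t := p / q; nra.
Qed.
Lemma cnormE (R : realType) (z : R[i]) : 0 <= z -> z = (complex.Re z)%:C.
Proof. by move=> /ger0_Im h; case: z h => a b /= ->. Qed.

Lemma normE (R : realType) (A : normedModType R[i]) (x : A) : `|x| = (nrm x)%:C.
Proof. by rewrite /nrm -cnormE. Qed.

Lemma nrm_ge0 (R : realType) (A : normedModType R[i]) (x : A) : 0 <= nrm x.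
Proof. by have := normr_ge0 x; rewrite normE lecR. Qed.

Lemma nrm0 (R : realType) (A : normedModType R[i]) : nrm (0 : A) = 0.
Proof. by rewrite /nrm normr0. Qed.

Lemma nrm_eq0 (R : realType) (A : normedModType R[i]) (x : A) : nrm x = 0 -> x = 0.
Proof. by move=> h; apply/normr0_eq0; rewrite normE h. Qed.

Lemma nrmZ (R : realType) (A : normedModType R[i]) (c : R[i]) (x : A) :
  nrm (c *: x) = complex.Re `|c| * nrm x.
Proof.
rewrite /nrm normrZ (@cnormE _ `|c|) ?normr_ge0 //.
by case: `|x| => a b /=; rewrite mul0r subr0.
Qed.

Lemma nrmN (R : realType) (A : normedModType R[i]) (x : A) : nrm (- x) = nrm x.
Proof. by rewrite /nrm normrN. Qed.

Lemma Re_nat (R : realType) (k : nat) : complex.Re `|(k%:R : R[i])| = k%:R.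
Proof. rewrite normr_nat; elim: k => // k IH. rewrite !mulrS; move: IH; by case: (k%:R : R[i]) => a b /= ->. Qed.
Lemma pow2lt (R : realType) (s : R) : s < 1 -> (2:R) `^ s < 2.
Proof.
move=> s1; rewrite /powR (negbTE (lt0r_neq0 (ltr0n _ 2))).
rewrite -[X in _ < X]lnK ?posrE // ltr_expR.
have l2 : 0 < ln (2:R) by rewrite ln_gt0 // ltr1n.
nra.
Qed.

Lemma pow2k (R : realType) (r : R) (k : nat) : ((2:R) ^+ k) `^ r = ((2:R) `^ r) ^+ k.
Proof. by rewrite -powR_mulrn // powRAC powR_mulrn // powR_ge0. Qed.

Lemma pnrm (R : realType) (A : normedModType R[i]) (r : R) (k : nat) (x : A) :
  (nrm ((2 ^ k)%:R *: x)) `^ r = ((2:R) `^ r) ^+ k * (nrm x) `^ r.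
Proof.
by rewrite nrmZ Re_nat powRM ?nrm_ge0 // natrX pow2k.
Qed.

Lemma nrmZk (R : realType) (A : normedModType R[i]) (k : nat) (x : A) :
  nrm ((k%:R : R[i]) *: x) = k%:R * nrm x.
Proof. by rewrite nrmZ Re_nat. Qed.
Lemma lpowZx (R : realType) (A : completeNormedModType R[i]) (mul : A -> A -> A)
  (HR : forall (c : R[i]) x y, mul x (c *: y) = c *: mul x y) a k (c : R[i]) x :
  lpow mul a k (c *: x) = c *: lpow mul a k x.
Proof. by elim: k => //= k IH; rewrite /lpow /= -/(lpow _ _ _ _) IH HR. Qed.

Lemma rpowZx (R : realType) (A : completeNormedModType R[i]) (mul : A -> A -> A)
  (HL : forall (c : R[i]) x y, mul (c *: x) y = c *: mul x y) a k (c : R[i]) x :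
  rpow mul a k (c *: x) = c *: rpow mul a k x.
Proof. by elim: k => //= k IH; rewrite /rpow /= -/(rpow _ _ _ _) IH HL. Qed.

Lemma lpowZa (R : realType) (A : completeNormedModType R[i]) (mul : A -> A -> A)
  (HL : forall (c : R[i]) x y, mul (c *: x) y = c *: mul x y)
  (HR : forall (c : R[i]) x y, mul x (c *: y) = c *: mul x y) a k (c : R[i]) x :
  lpow mul (c *: a) k x = c ^+ k *: lpow mul a k x.
Proof.
elim: k => [|k IH]; first by rewrite expr0 scale1r.
by rewrite /lpow /= -!/(lpow _ _ _ _) IH HL HR scalerA exprS.
Qed.

Lemma rpowZa (R : realType) (A : completeNormedModType R[i]) (mul : A -> A -> A)
  (HL : forall (c : R[i]) x y, mul (c *: x) y = c *: mul x y)
  (HR : forall (c : R[i]) x y, mul x (c *: y) = c *: mul x y) a k (c : R[i]) x :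
  rpow mul (c *: a) k x = c ^+ k *: rpow mul a k x.
Proof.
elim: k => [|k IH]; first by rewrite expr0 scale1r.
by rewrite /rpow /= -!/(rpow _ _ _ _) IH HL HR scalerA exprSr.
Qed.

Lemma apowZ (R : realType) (A : completeNormedModType R[i]) (mul : A -> A -> A)
  (HL : forall (c : R[i]) x y, mul (c *: x) y = c *: mul x y)
  (HR : forall (c : R[i]) x y, mul x (c *: y) = c *: mul x y) a n (c : R[i]) :
  (0 < n)%N -> apow mul (c *: a) n = c ^+ n *: apow mul a n.
Proof.
case: n => // n _; rewrite /apow /= lpowZa // lpowZx // scalerA -exprSr //.
Qed.

Lemma jsumZ (R : realType) (A : completeNormedModType R[i]) (mul : A -> A -> A)
  (HL : forall (c : R[i]) x y, mul (c *: x) y = c *: mul x y)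
  (HR : forall (c : R[i]) x y, mul x (c *: y) = c *: mul x y) n (f : A -> A) a (c : R[i]) :
  (forall y, f (c *: y) = c *: f y) ->
  jordan_sum mul n f (c *: a) = c ^+ n *: jordan_sum mul n f a.
Proof.
move=> hf; rewrite /jordan_sum scaler_sumr; apply: eq_bigr => k _.
rewrite hf lpowZa // lpowZx // rpowZa // !rpowZx // !scalerA.
congr (_ *: _); rewrite -exprD -exprSr; congr (_ ^+ _).
have := ltn_ord k; case: n {hf} k => [[]//|n] k /=; lia.
Qed.
Lemma nrm_le0 (R : realType) (A : normedModType R[i]) (x : A) : nrm x <= 0 -> x = 0.
Proof. by move=> h; apply: nrm_eq0; apply/le_anti; rewrite h nrm_ge0. Qed.

Lemma half_add {R : realType} {A : completeNormedModType R[i]} (u : A) :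
  (2%:R : R[i])^-1 *: (u + u) = u.
Proof.
rewrite -mulr2n -(@scaler_nat R[i] A 2) scalerA mulVf ?scale1r // pnatr_eq0.
Qed.

Lemma dbl_inj (R : realType) (A : completeNormedModType R[i]) (u v : A) :
  u + u = v + v -> u = v.
Proof. by move=> h; rewrite -(half_add u) h half_add. Qed.

Theorem corollary2p6 (R : realType) (A : completeNormedModType R[i])
  (mul : A -> A -> A) (n : nat) (r theta : R) (f : A -> A) :
  banach_algebra_mul mul ->
  (2 <= n)%N ->
  0 < r -> r < 2^-1 -> 0 <= theta ->
  (forall (mu : R[i]), `|mu| = 1 -> forall x y a : A,
     nrm (mu *: f ((2%:R : R[i])^-1 *: (x + y)) + mu *: f ((2%:R : R[i])^-1 *: (x - y))
          - f (mu *: x) + f (apow mul a n) - jordan_sum mul n f a)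
     <= theta * (nrm x `^ r * nrm y `^ r + nrm a `^ (2 * r))) ->
  exists! D : A -> A,
    n_jordan_derivation mul n D /\
    (forall x : A, nrm (f x - D x) <= 3 `^ r * theta / (2 - 2 `^ r) * nrm x `^ (2 * r)).
Proof.
move=> [_ [_ [_ [HL [HR _]]]]] n2 r0 r2 th0 H.
have r0' : r != 0 by rewrite gt_eqF.
have r20 : 2 * r != 0 by rewrite mulf_neq0 // pnatr_eq0.
set E := fun a => f (apow mul a n) - jordan_sum mul n f a.
have n1 : `|(1 : R[i])| = 1 by rewrite normr1.
have nm1 : `|(-1 : R[i])| = 1 by rewrite normrN normr1.
have h0 : (2%:R : R[i])^-1 *: (0 + 0 : A) = 0 by rewrite addr0 scaler0.
have h0' : (2%:R : R[i])^-1 *: (0 - 0 : A) = 0 by rewrite subr0 scaler0.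
have e1 : f 0 + E 0 = 0.
  apply: nrm_le0; have := H 1 n1 0 0 0.
  rewrite h0 h0' !scale1r nrm0 !powR0 // mulr0 addr0 mulr0 /E.
  by rewrite -!addrA [f 0 + (- f 0 + _)]addrA addrN add0r.
have e2 : - f 0 - f 0 - f 0 + E 0 = 0.
  apply: nrm_le0; have := H (-1) nm1 0 0 0.
  rewrite h0 h0' !scaleN1r oppr0 nrm0 !powR0 // mulr0 addr0 mulr0 /E.
  by rewrite -!addrA.
have f0 : f 0 = 0.
  have : (4%:R : R[i]) *: f 0 = 0.
    have -> : (4%:R : R[i]) *: f 0 = (f 0 + E 0) - (- f 0 - f 0 - f 0 + E 0).
      rewrite (@scaler_nat R[i] A 4); move: (E 0) (f 0) => e x.
      rewrite !opprD !opprK addrACA addrN addr0.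
      by rewrite !mulrS mulr0n addr0 !addrA.
    by rewrite e1 e2 subrr.
  by move/eqP; rewrite scaler_eq0 pnatr_eq0 /= => /eqP.
have E0 : E 0 = 0 by move: e1; rewrite f0 add0r.
have H' : forall mu : R[i], `|mu| = 1 -> forall x y a : A,
     nrm (mu *: f ((2%:R : R[i])^-1 *: (x + y)) + mu *: f ((2%:R : R[i])^-1 *: (x - y))
          - f (mu *: x) + E a)
     <= theta * (nrm x `^ r * nrm y `^ r + nrm a `^ (2 * r)).
  by move=> mu hmu x y a; rewrite /E addrA; apply: H.
have fmu2 : forall mu : R[i], `|mu| = 1 -> forall x,
    f (mu *: x) = mu *: (f ((2%:R : R[i])^-1 *: x) + f ((2%:R : R[i])^-1 *: x)).
  move=> mu hmu x; have := H' mu hmu x 0 0.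
  rewrite nrm0 powR0 // mulr0 powR0 // E0 subr0 !addr0 mulr0.
  by move=> /nrm_le0 /eqP; rewrite subr_eq0 scalerDr => /eqP <-.
have f1 : forall x, f x = f ((2%:R : R[i])^-1 *: x) + f ((2%:R : R[i])^-1 *: x).
  by move=> x; have := fmu2 1 n1 x; rewrite !scale1r.
have fmu : forall mu : R[i], `|mu| = 1 -> forall x, f (mu *: x) = mu *: f x.
  by move=> mu hmu x; rewrite fmu2 // -f1.
have fdbl : forall x, f (x + x) = f x + f x by move=> x; rewrite f1 half_add.
have f2k : forall k x, f ((2 ^ k)%:R *: x) = (2 ^ k)%:R *: f x.
  move=> k x; elim: k => [|k IH]; first by rewrite expn0 !scale1r.
  by rewrite expnS mulSn mul1n natrD !scalerDl fdbl IH.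
have qE : (2:R) `^ (2 * r) = 2 `^ r * 2 `^ r.
  rewrite mulr_natl mulr2n powRD //; apply/implyP => _; rewrite gt_eqF //; lra.
set q := (2:R) `^ (2 * r).
have q0 : 0 < q by rewrite /q powR_gt0.
have q2 : q < 2 by rewrite /q pow2lt //; lra.
have Hadd : forall u v, nrm (f u + f v - f (u + v)) <=
    theta * (nrm (u + v) `^ r * nrm (u - v) `^ r).
  move=> u v; have := H' 1 n1 (u + v) (u - v) 0.
  rewrite !scale1r E0 addr0 nrm0 powR0 // addr0.
  have -> : (u + v) + (u - v) = u + u by rewrite addrACA addrN addr0.
  have -> : (u + v) - (u - v) = v + v by rewrite opprB addrC addrA subrK.
  by rewrite !half_add.
have fadd : forall u v, f (u + v) = f u + f v.
  move=> u v; apply/esym/eqP; rewrite -subr_eq0; apply/eqP/nrm_eq0.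
  apply: (@geo0 R _ (theta * (nrm (u + v) `^ r * nrm (u - v) `^ r)) 2 q) => //.
    exact: nrm_ge0.
  move=> k; have := Hadd ((2 ^ k)%:R *: u) ((2 ^ k)%:R *: v).
  rewrite -!scalerDr -scalerBr !f2k -scalerDr -scalerBr nrmZk !pnrm natrX.
  rewrite /q qE exprMn mulrC; move=> h; apply: (le_trans h); rewrite le_eqVlt; apply/orP; left; apply/eqP; ring.
have fnat : forall (m : nat) x, f ((m%:R : R[i]) *: x) = (m%:R : R[i]) *: f x.
  move=> m x; elim: m => [|m IH]; first by rewrite !scale0r f0.
  by rewrite !mulrS !scalerDl !scale1r fadd IH.
have freal1 : forall t : R, -1 <= t <= 1 -> forall x, f (t%:C *: x) = t%:C *: f x.
  move=> t /andP[t1 t2] x.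
  set s := Num.sqrt (1 - t ^+ 2).
  have s2 : s ^+ 2 = 1 - t ^+ 2 by rewrite sqr_sqrtr //; nra.
  have hmu : `|(t +i* s)| = 1.
    by rewrite normc_def /= s2 addrC subrK sqrtr1.
  have hnu : `|(t +i* (- s))| = 1.
    by rewrite normc_def /= sqrrN s2 addrC subrK sqrtr1.
  have hsum : (t +i* s) + (t +i* (- s)) = t%:C + t%:C.
    by simpc.
  apply: dbl_inj.
  rewrite -fadd -scalerDl -hsum scalerDl fadd fmu // fmu //.
  by rewrite -scalerDl hsum scalerDl.
have freal : forall (t : R) x, f (t%:C *: x) = t%:C *: f x.
  move=> t x; set M := (Num.truncn `|t|).+1.
  have hM : `|t| < M%:R by apply: truncnS_gt.
  have M0 : 0 < M%:R :> R by rewrite ltr0n.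
  have -> : t%:C = (M%:R : R[i]) * (t / M%:R)%:C.
    by rewrite -(rmorph_nat (real_complex R) M) -rmorphM mulrCA divff ?mulr1 // gt_eqF.
  have ht : -1 <= t / M%:R <= 1.
    rewrite -ler_norml normrM normfV (ger0_norm (ltW M0)) ler_pdivrMr // mul1r.
    exact: ltW.
  by rewrite -!scalerA fnat freal1.
have hi : `|'i : R[i]| = 1 by rewrite normc_def /= expr0n /= add0r expr1n sqrtr1.
have flin : forall (c : R[i]) x, f (c *: x) = c *: f x.
  move=> c x; rewrite (complexE c) scalerDl fadd freal -scalerA fmu // freal.
  by rewrite scalerA scalerDl.
have n0 : (0 < n)%N by apply: leq_trans n2.
have EZ : forall (c : R[i]) a, E (c *: a) = c ^+ n *: E a.
  move=> c a; rewrite /E apowZ // (@jsumZ R A mul HL HR n f a c (flin c)).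
  by rewrite flin scalerBr.
have Ej : forall a, E a = 0.
  move=> a; apply: nrm_eq0.
  apply: (@geo0 R _ (theta * nrm a `^ (2 * r)) (2 ^ n)%:R q) => //.
  - exact: nrm_ge0.
  - apply: (lt_le_trans q2); rewrite ler_nat.
    by rewrite -{1}(expn1 2) leq_pexp2l.
  move=> k; have := H' 1 n1 0 0 ((2 ^ k)%:R *: a).
  rewrite !scale1r addr0 subr0 scaler0 f0 !addr0 subrr add0r nrm0 powR0 // mul0r add0r.
  rewrite EZ -[((2 ^ k)%:R : R[i]) ^+ n]natrX nrmZk pnrm -/q.
  move=> h; rewrite -natrX -expnM mulnC expnM mulrC; apply: (le_trans h).
  by rewrite le_eqVlt; apply/orP; left; apply/eqP; ring.
have rr : r < 1 by lra.
have s2 : 2 `^ r < 2 :> R by apply: pow2lt.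
exists f; split.
  split.
    split; [exact: fadd | exact: flin | move=> a; apply/eqP; rewrite -subr_eq0; apply/eqP; exact: Ej].
  move=> x; rewrite subrr nrm0; apply: mulr_ge0; last exact: powR_ge0.
  apply: divr_ge0; last by lra.
  by apply: mulr_ge0 => //; apply: powR_ge0.
move=> D [[Dadd DZ DJ] Db]; apply: funext => x.
apply/eqP; rewrite -subr_eq0; apply/eqP/nrm_eq0.
apply: (@geo0 R _ (3 `^ r * theta / (2 - 2 `^ r) * nrm x `^ (2 * r)) 2 q) => //.
  exact: nrm_ge0.
move=> k; have := Db ((2 ^ k)%:R *: x).
rewrite flin DZ -scalerBr nrmZk pnrm -/q natrX.
move=> h; rewrite mulrC; apply: (le_trans h); rewrite le_eqVlt; apply/orP; left; apply/eqP; ring.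
Qed.
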